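(* Consider the query incentive model on a deterministic chain (every node has exactly one child), with root at position $0$ and agents at positions $1,2,3,\dots$, where each agent independently holds an answer with probability $p=1/n$, and let $h\ge 1$ be the desired level to which the root wants to propagate the query. Then there exists a sybil-proof direct referral incentive mechanism whose expected cost is $O(nh^2)$.
   Context: Model. The root issues a query which is propagated down the chain. An oblivious reward scheme on the chain is a function $r(i,s)$ ($i\ge1$, $s\ge0$, $i+s\le h$): if the first answer in the chain is at position $i+s\le h$, then the agent at position $i$ receives $r(i,s)$ (so $r(i,0)$ is the reward of the answer holder); if no agent among positions $1,\dots,h$ holds an answer, nobody is paid. A direct referral (DR) mechanism is one in which $r(i,s)=1$ whenever $s\notin\{0,1\}$, i.e. only the first answer holder and its direct parent may receive more than one unit. The expected cost is $\mathbb{E}[\sum_{i=1}^{J} r(i,J-i)]$, where $J$ is the position of the first answer if $J\le h$ (and the sum is empty otherwise). Sybil attacks. An agent may create fake identities: if it holds no answer it may insert $k\ge0$ additional identities between itself and its successor (so its identities occupy $k+1$ consecutive positions and all later agents are shifted down by $k$); if it holds an answer it may create a chain of identities and place its answer at any of them. The payoff of an agent is the expected total reward collected by all of its identities, conditioned on its own answer status and on the event that no earlier agent holds an answer. The mechanism is sybil-proof (with level $h$) if the following profile is a Nash equilibrium: every agent at position $<h$ without an answer propagates the query and creates no sybil; every agent holding an answer reports it without creating sybils and does not propagate; the agent at position $h$ reports its answer if it has one and does not propagate; all agents forward the selected answer. *)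

(* Defs.v *)
From mathcomp Require Import all_boot all_order all_algebra.
Set Implicit Arguments. Unset Strict Implicit. Unset Printing Implicit Defensive.
Import Order.TTheory GRing.Theory Num.Theory.
Local Open Scope ring_scope.

(* An oblivious reward scheme on the chain: r i s is the reward of the agent
   at position i when the first answer is at position i + s.  Only the values
   with 1 <= i and i + s <= h are ever used. *)

Definition nonneg_reward (R : numDomainType) (h : nat) (r : nat -> nat -> R) :=
  forall i s : nat, (1 <= i)%N -> (i + s <= h)%N -> 0 <= r i s.

Definition is_DR (R : numDomainType) (h : nat) (r : nat -> nat -> R) :=
  forall i s : nat, (1 <= i)%N -> (i + s <= h)%N -> (2 <= s)%N -> r i s = 1.

Definition pay_sum (R : numDomainType) (r : nat -> nat -> R) (J : nat) : R :=
  \sum_(1 <= i < J.+1) r i (J - i)%N.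

Definition exp_cost (R : numDomainType) (p : R) (h : nat) (r : nat -> nat -> R) : R :=
  \sum_(1 <= J < h.+1) (1 - p) ^+ (J - 1) * p * pay_sum r J.

(* Payoff of an answer-holding agent at position i which creates a chain of
   identities at positions i, i+1, ..., and places its answer at identity
   i + m (m = 0: honest report without sybil). *)
Definition payoff_answer (R : numDomainType) (h : nat) (r : nat -> nat -> R)
    (i m : nat) : R :=
  if (i + m <= h)%N then \sum_(0 <= l < m.+1) r (i + l)%N (m - l)%N else 0.

(* Payoff of an agent at position i that propagates the query after inserting
   k sybils (identities at i..i+k, later agents shifted by k), all other agents
   following the profile.  The t-th successor (t >= 1) is the first answer
   holder with probability (1-p)^(t-1) p, and then sits at position i+t+k.
   k = 0: honest propagation without sybils. *)
Definition payoff_prop (R : numDomainType) (p : R) (h : nat) (r : nat -> nat -> R)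
    (i k : nat) : R :=
  \sum_(1 <= t < h.+1)
     (if (i + t + k <= h)%N then
        (1 - p) ^+ (t - 1) * p * \sum_(0 <= m < k.+1) r (i + m)%N (t + k - m)%N
      else 0).

(* Sybil-proofness with level h: the prescribed profile is a Nash equilibrium.
   For every position 1 <= i <= h (conditioned on no earlier answer):
   - an agent holding an answer prefers reporting it without sybils (payoff
     r i 0) to: doing nothing (payoff 0), placing its answer on any identity
     of a sybil chain, or withholding its answer and propagating with any
     number of sybils;
   - an agent without an answer prefers the prescribed action (propagate
     without sybils if i < h; for i = h this payoff is 0, i.e. not
     propagating) to doing nothing (payoff 0) and to propagating with any
     number k of sybils. *)
Definition sybil_proof (R : numDomainType) (p : R) (h : nat) (r : nat -> nat -> R) :=
  forall i : nat, (1 <= i)%N -> (i <= h)%N ->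
    [/\ 0 <= r i 0,
        (forall m : nat, payoff_answer h r i m <= r i 0),
        (forall k : nat, payoff_prop p h r i k <= r i 0),
        0 <= payoff_prop p h r i 0
      & (forall k : nat, payoff_prop p h r i k <= payoff_prop p h r i 0)].

(* Main.v *)
Require Import Defs.
From mathcomp Require Import all_boot all_order all_algebra.
From mathcomp Require Import ring lra zify.
Import Order.TTheory GRing.Theory Num.Theory.
Set Implicit Arguments. Unset Strict Implicit.
Local Open Scope ring_scope.

Section S.
Variable R : realFieldType.

Definition rw (n : R) (h i s : nat) : R :=
  if s == 0%N then (2 * n * h%:R + 1) * (h - i)%N%:R + 1
  else if s == 1%N then 2 * n * (h - i)%N%:R else 1.

Lemma geom (p : R) T :
  \sum_(1 <= t < T.+1) (1 - p) ^+ (t - 1) * p = 1 - (1 - p) ^+ T.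
Proof.
elim: T => [|T IH]; first by rewrite big_geq // expr0 subrr.
rewrite big_nat_recr //= IH subn1 /= exprS; ring.
Qed.

Lemma wsum_le (p : R) (h : nat) (f : nat -> R) c :
  0 <= p -> p <= 1 -> 0 <= c ->
  (forall t, (1 <= t < h.+1)%N -> f t <= (1 - p) ^+ (t - 1) * p * c) ->
  \sum_(1 <= t < h.+1) f t <= c.
Proof.
move=> p0 p1 c0 H.
apply: le_trans (ler_sum_nat H) _.
rewrite -mulr_suml geom.
have : 0 <= (1 - p) ^+ h by apply: exprn_ge0; lra.
nra.
Qed.

Lemma w_ge0 (p : R) t : 0 <= p -> p <= 1 -> 0 <= (1 - p) ^+ (t - 1) * p.
Proof. move=> p0 p1; apply: mulr_ge0 => //; apply: exprn_ge0; lra. Qed.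

Lemma rw_ge0 n h i s : 0 <= n -> 0 <= rw n h i s.
Proof.
move=> n0; rewrite /rw; case: ifP => _.
  apply: addr_ge0 => //; apply: mulr_ge0 => //; apply: addr_ge0 => //.
  by apply: mulr_ge0 => //; apply: mulr_ge0.
case: ifP => _ //; by apply: mulr_ge0 => //; apply: mulr_ge0.
Qed.

Lemma rw_le_s n h i s : 0 <= n -> (1 <= s)%N -> rw n h i s <= 2 * n * h%:R + 1.
Proof.
move=> n0 s1; rewrite /rw; case: eqP => [E|_]; first by rewrite E in s1.
have H0 : 0 <= 2 * n * h%:R by apply: mulr_ge0 => //; apply: mulr_ge0.
case: ifP => _; last lra.
have : (h - i)%N%:R <= h%:R :> R by rewrite ler_nat leq_subr.
have : 0 <= 2 * n by apply: mulr_ge0.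
nra.
Qed.

Lemma rw_le_b n h i s : 0 <= n -> (1 <= s)%N -> rw n h i s <= 2 * n * (h - i)%N%:R + 1.
Proof.
move=> n0 s1; rewrite /rw; case: eqP => [E|_]; first by rewrite E in s1.
have H0 : 0 <= 2 * n * (h - i)%N%:R by apply: mulr_ge0 => //; apply: mulr_ge0.
case: ifP => _; lra.
Qed.

End S.
Section S.
Variable R : realFieldType.

Lemma S_ge2 (n : R) h i k t : (2 <= t)%N ->
  \sum_(0 <= m < k.+1) rw n h (i + m) (t + k - m) = k.+1%:R.
Proof.
move=> t2.
rewrite (eq_big_nat _ _ (F2 := fun _ => 1)); first by rewrite sumr_const_nat subn0.
move=> m /andP [_ mk]; rewrite /rw.
have -> : (t + k - m == 0)%N = false by apply/negbTE; rewrite -lt0n; lia.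
have -> : (t + k - m == 1)%N = false by apply/negbTE; apply/eqP; lia.
by [].
Qed.

Lemma S_1 (n : R) h i k :
  \sum_(0 <= m < k.+1) rw n h (i + m) (1 + k - m) = k%:R + 2 * n * (h - (i + k))%N%:R.
Proof.
rewrite big_nat_recr //=.
rewrite (eq_big_nat _ _ (F2 := fun _ => 1)); first rewrite sumr_const_nat subn0.
  rewrite /rw; have -> : (1 + k - k = 1)%N by lia. by [].
move=> m /andP [_ mk]; rewrite /rw.
have -> : (1 + k - m == 0)%N = false by apply/negbTE; rewrite -lt0n; lia.
have -> : (1 + k - m == 1)%N = false by apply/negbTE; apply/eqP; lia.
by [].
Qed.

End S.
Section S.
Variable R : realFieldType.
Variables (n : R) (h : nat).
Hypotheses (hn : 1 <= n) (hh : (1 <= h)%N).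

Let n0 : 0 <= n. Proof. move: hn; lra. Qed.
Let p0 : 0 <= n^-1. Proof. by rewrite invr_ge0. Qed.
Let p1 : n^-1 <= 1. Proof. move: hn => hn'; rewrite invf_le1 //; lra. Qed.

Lemma prop0_ge0 i : 0 <= payoff_prop n^-1 h (rw n h) i 0.
Proof.
apply: sumr_ge0 => t _; case: ifP => _ //.
apply: mulr_ge0; first exact: w_ge0.
by apply: sumr_ge0 => m _; apply: rw_ge0.
Qed.

Lemma prop0_le i : payoff_prop n^-1 h (rw n h) i 0 <= 2 * n * (h - i)%N%:R + 1.
Proof.
apply: (wsum_le (p := n^-1)) => //.
  by apply: addr_ge0 => //; apply: mulr_ge0 => //; apply: mulr_ge0.
move=> t /andP [t1 _]; case: ifP => _.
  apply: (@ler_wpM2l _ ((1 - n^-1) ^+ (t - 1) * n^-1)); first exact: w_ge0.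
  rewrite big_nat1 !addn0 subn0; exact: rw_le_b.
apply: mulr_ge0; first exact: w_ge0.
by apply: addr_ge0 => //; apply: mulr_ge0 => //; apply: mulr_ge0.
Qed.

Lemma prop_le i k : payoff_prop n^-1 h (rw n h) i k <= payoff_prop n^-1 h (rw n h) i 0.
Proof.
case: k => [//|k].
case: (leqP (i + 1 + k.+1) h) => hik; last first.
  have -> : payoff_prop n^-1 h (rw n h) i k.+1 = \sum_(1 <= t < h.+1) 0.
    apply: eq_big_nat => t /andP [t1 _]; case: ifP => // HH; exfalso; lia.
  by rewrite big1 // prop0_ge0.
rewrite /payoff_prop big_ltn // [X in _ <= X]big_ltn //.
rewrite (ifT _ _ hik) (ifT _ _ (_ : (i + 1 + 0 <= h)%N)); last lia.
rewrite S_1 big_nat1 addn0 subn0 /= expr0 mul1r.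
have -> : rw n h i 1 = 2 * n * (h - i)%N%:R by [].
have rest0 : 0 <= \sum_(2 <= t < h.+1)
   (if (i + t + 0 <= h)%N then (1 - n^-1) ^+ (t - 1) * n^-1 *
      \sum_(0 <= m < 1) rw n h (i + m) (t + 0 - m) else 0).
  apply: sumr_ge0 => t _; case: ifP => _ //.
  apply: mulr_ge0; first exact: w_ge0.
  by apply: sumr_ge0 => m _; apply: rw_ge0.
have restk : \sum_(2 <= t < h.+1)
   (if (i + t + k.+1 <= h)%N then (1 - n^-1) ^+ (t - 1) * n^-1 *
      \sum_(0 <= m < k.+2) rw n h (i + m) (t + k.+1 - m) else 0)
   <= (k.+2)%:R * (1 - n^-1).
  have G := geom n^-1 h.
  rewrite big_ltn // expr0 mul1r in G.
  set S := \sum_(2 <= t < h.+1) (1 - n^-1) ^+ (t - 1) * n^-1 in G *.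
  apply: le_trans (_ : (k.+2)%:R * \sum_(2 <= t < h.+1) (1 - n^-1) ^+ (t - 1) * n^-1 <= _).
    rewrite mulr_sumr; apply: ler_sum_nat => t /andP [t2 _].
    case: ifP => _.
      rewrite S_ge2 // mulrC; apply: ler_wpM2r; first exact: w_ge0.
      by [].
    apply: mulr_ge0 => //; exact: w_ge0.
  apply: ler_wpM2l => //; rewrite -/S.
  have qh : 0 <= (1 - n^-1) ^+ h by rewrite exprn_ge0 // subr_ge0.
  lra.
have Hb : n^-1 * (k.+1%:R + 2 * n * (h - (i + k.+1))%N%:R) + k.+2%:R * (1 - n^-1)
   <= n^-1 * (2 * n * (h - i)%N%:R).
  rewrite !natrB; try lia. rewrite natrD.
  have nz : n != 0 by apply: lt0r_neq0; apply: lt_le_trans hn.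
  have -> : n^-1 * (k.+1%:R + 2 * n * (h%:R - (i%:R + k.+1%:R))) =
     n^-1 * k.+1%:R + 2 * (h%:R - (i%:R + k.+1%:R)) by field.
  have -> : n^-1 * (2 * n * (h%:R - i%:R)) = 2 * (h%:R - i%:R) by field.
  rewrite -[k.+2]addn1 natrD -[k.+1]addn1 natrD.
  have : 0 <= k%:R :> R by [].
  move: p0; nra.
lra.
Qed.


Lemma answer_le i m : payoff_answer h (rw n h) i m <= rw n h i 0.
Proof.
have a0 : 0 <= rw n h i 0 by apply: rw_ge0.
rewrite /payoff_answer; case: ifP => him //.
rewrite big_nat_recr //= subnn.
have -> : rw n h i 0 = (2 * n * h%:R + 1) * (h - i)%N%:R + 1 by [].
have -> : rw n h (i + m) 0 = (2 * n * h%:R + 1) * (h - (i + m))%N%:R + 1 by [].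
have H1 : \sum_(0 <= l < m) rw n h (i + l) (m - l) <= (2 * n * h%:R + 1) * m%:R.
  apply: le_trans (_ : \sum_(0 <= l < m) (2 * n * h%:R + 1) <= _).
    apply: ler_sum_nat => l /andP [_ lm]; apply: rw_le_s => //; lia.
  by rewrite sumr_const_nat subn0 [X in _ <= X]mulr_natr.
move: H1; rewrite !natrB; try lia. rewrite natrD.
set K := 2 * n * h%:R + 1; lra.
Qed.

Lemma cost_le : exp_cost n^-1 h (rw n h) <= 7 * n * h%:R ^+ 2.
Proof.
have H1 : 1 <= h%:R :> R by rewrite ler1n.
have n1 := hn.
apply: (wsum_le (p := n^-1)) => //.
  by apply: mulr_ge0; [apply: mulr_ge0 => //; lra | apply: exprn_ge0; lra].
move=> J /andP [J1 Jh].
apply: (@ler_wpM2l _ ((1 - n^-1) ^+ (J - 1) * n^-1)); first exact: w_ge0.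
rewrite /pay_sum big_nat_recr //= subnn.
have -> : rw n h J 0 = (2 * n * h%:R + 1) * (h - J)%N%:R + 1 by [].
have H2 : \sum_(1 <= l < J) rw n h l (J - l) <= (2 * n * h%:R + 1) * (J - 1)%N%:R.
  apply: le_trans (_ : \sum_(1 <= l < J) (2 * n * h%:R + 1) <= _).
    apply: ler_sum_nat => l /andP [_ lm]; apply: rw_le_s => //; lia.
  by rewrite sumr_const_nat [X in _ <= X]mulr_natr.
have H3 : (J - 1)%N%:R <= h%:R :> R by rewrite ler_nat; lia.
have H4 : (h - J)%N%:R <= h%:R :> R by rewrite ler_nat; lia.
have H5 : 0 <= (J - 1)%N%:R :> R by [].
have H6 : 0 <= (h - J)%N%:R :> R by [].
move: H2 H3 H4 H5 H6 H1 n1.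
set A := (J - 1)%N%:R; set B := (h - J)%N%:R; set H := h%:R.
move=> H2 H3 H4 H5 H6 H1 n1.
have K0 : 0 <= 2 * n * H + 1 by nra.
have E1 : (2 * n * H + 1) * A <= (2 * n * H + 1) * H by apply: ler_wpM2l.
have E2 : (2 * n * H + 1) * B <= (2 * n * H + 1) * H by apply: ler_wpM2l.
have E3 : H <= n * H ^+ 2 by rewrite expr2; nra.
have E4 : 1 <= n * H ^+ 2 by nra.
have E5 : n * H <= n * H ^+ 2 by rewrite expr2; nra.
rewrite expr2 in E3 E4 E5 *.
nra.
Qed.

End S.



Theorem theorem1p1 (R : realFieldType) :
  exists C : R, 0 < C /\
    forall (n : R) (h : nat), 1 <= n -> (1 <= h)%N ->
      exists r : nat -> nat -> R,
        [/\ nonneg_reward h r, is_DR h r, sybil_proof n^-1 h r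
          & exp_cost n^-1 h r <= C * n * (h%:R) ^+ 2].
Proof.
exists 7; split; first lra.
move=> n h hn hh.
have n0 : 0 <= n by lra.
exists (rw n h); split.
- by move=> i s _ _; apply: rw_ge0.
- move=> i s _ _ s2; rewrite /rw.
  have -> : (s == 0)%N = false by apply/negbTE; rewrite -lt0n; lia.
  have -> : (s == 1)%N = false by apply/negbTE; apply/eqP; lia.
  by [].
- move=> i i1 ih; split.
  + exact: rw_ge0.
  + move=> m; exact: (answer_le hn hh).
  + move=> k; apply: le_trans (prop_le hn hh i k) _.
    apply: le_trans (prop0_le h hn i) _.
    have -> : rw n h i 0 = (2 * n * h%:R + 1) * (h - i)%N%:R + 1 by [].
    have H1 : 1 <= h%:R :> R by rewrite ler1n.
    have H2 : 0 <= (h - i)%N%:R :> R by [].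
    have H3 : 0 <= (n * (h - i)%N%:R) * (h%:R - 1) by apply: mulr_ge0; [apply: mulr_ge0|lra].
    lra.
  + exact: (prop0_ge0 h hn).
  + move=> k; exact: (prop_le hn hh).
- exact: (cost_le hn hh).
Qed.
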